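(* Let $X$ be a finite set with $|X|\ge 3$, let $T\in B(X)$, and let $\mathcal T$ be a minimal triplet cover of $T$. Then $|\mathcal T|\le 3(|X|-2)$.
   Context: A binary phylogenetic $X$-tree is an unrooted tree whose leaf set is $X$ and all of whose non-leaf vertices are unlabelled of degree three; $B(X)$ is the set of such trees. Pairs in $\binom{X}{2}$ are written $ab$, triples $abc$. Given $\mathcal T\subseteq\binom{X}{2}$, a triple $abc$ supports an interior vertex $v$ if $a,b,c$ lie one in each of the three components of $T$ minus $v$ and $ab,ac,bc\in\mathcal T$; $\mathcal T$ is a triplet cover for $T$ if every interior vertex is supported by some triple. A triplet cover $\mathcal T$ is minimal if $\mathcal T-\{ab\}$ is not a triplet cover for $T$ for any $ab\in\mathcal T$. *)

(* Defs.v *)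
From mathcomp Require Import all_boot.
Set Implicit Arguments. Unset Strict Implicit. Unset Printing Implicit Defensive.

Definition simple_graph (V : finType) (e : rel V) : Prop :=
  (forall u v, e u v = e v u) /\ (forall v, ~~ e v v).

Definition deg (V : finType) (e : rel V) (v : V) : nat := #|[set w | e v w]|.

Definition is_tree (V : finType) (e : rel V) : Prop :=
  [/\ simple_graph e,
      (forall u v, connect e u v) &
      (forall c : seq V, uniq c -> 3 <= size c -> ~~ cycle e c)].

(* Binary phylogenetic X-tree: tree (V,e) with leaf labelling phi : X -> V,
   injective, labelled vertices are exactly the leaves (degree <= 1), and all
   unlabelled (interior) vertices have degree three. *)
Definition binary_phylo_tree (X V : finType) (e : rel V) (phi : X -> V) : Prop :=
  [/\ is_tree e, injective phi,
      (forall x, deg e (phi x) <= 1) &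
      (forall v, v \notin codom phi -> deg e v = 3)].

Definition interior (X V : finType) (phi : X -> V) (v : V) : bool :=
  v \notin codom phi.

Definition del_rel (V : finType) (e : rel V) (v : V) : rel V :=
  [rel x y | [&& e x y, x != v & y != v]].

Definition separated (X V : finType) (e : rel V) (phi : X -> V) (v : V) (a b : X)
  : bool := ~~ connect (del_rel e v) (phi a) (phi b).

Definition pair2 (X : finType) (a b : X) : {set X} := [set a; b].

Definition supports (X V : finType) (e : rel V) (phi : X -> V)
  (Tc : {set {set X}}) (a b c : X) (v : V) : bool :=
  [&& separated e phi v a b, separated e phi v a c, separated e phi v b c,
      pair2 a b \in Tc, pair2 a c \in Tc & pair2 b c \in Tc].

Definition triplet_cover (X V : finType) (e : rel V) (phi : X -> V)
  (Tc : {set {set X}}) : Prop :=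
  (forall p, p \in Tc -> #|p| = 2) /\
  (forall v, interior phi v -> exists a b c, supports e phi Tc a b c v).

Definition minimal_triplet_cover (X V : finType) (e : rel V) (phi : X -> V)
  (Tc : {set {set X}}) : Prop :=
  triplet_cover e phi Tc /\
  (forall p, p \in Tc -> ~ triplet_cover e phi (Tc :\ p)).

(* Main.v *)
Require Import Defs.
From mathcomp Require Import all_boot zify.
Set Implicit Arguments. Unset Strict Implicit. Unset Printing Implicit Defensive.

Lemma card_bigcup_le (I T : finType) (P : pred I) (F : I -> {set T}) :
  #|\bigcup_(i | P i) F i| <= \sum_(i | P i) #|F i|.
Proof.
apply: (big_ind2 (fun (A : {set T}) n => #|A| <= n)) => [|A n B m h1 h2|i _] //.
  by rewrite cards0.
have [HU _] := leq_card_setU A B; apply: leq_trans HU _; exact: leq_add.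

Qed.

Section Forest.
Variables (V : finType) (e : rel V).
Hypothesis esym : forall u v, e u v = e v u.
Hypothesis irr : forall v, ~~ e v v.
Hypothesis acyc : forall c : seq V, uniq c -> 3 <= size c -> ~~ cycle e c.

Definition nb (S : {set V}) u := [set w in S | e u w].

Lemma no_dense S : S != set0 -> (forall x, x \in S -> 2 <= #|nb S x|) -> False.
Proof.
move=> /set0Pn [x0 Hx0] Hdeg.
have step : forall x rest, path e x rest -> uniq (x :: rest) ->
    all (fun w => w \in S) (x :: rest) ->
    exists y, [/\ e y x, y \in S & y \notin x :: rest].
  move=> x rest Hp Hu Ha.
  case: (pickP [pred y | (y \in nb S x) && (y \notin x :: rest)]) => [y /andP[Hy Hn]|Hnone].
    move: Hy; rewrite inE => /andP[yS exy]; exists y; split => //.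
    by rewrite esym.
  exfalso.
  have xS : x \in S by move: Ha => /= /andP[].
  have /set0Pn [y Hy] : nb S x :\ head x rest != set0.
    rewrite -card_gt0; have := cardsD1 (head x rest) (nb S x); have := Hdeg x xS.
    have := leq_b1 (head x rest \in nb S x); lia.
  move: Hy; rewrite !inE => /andP[yh /andP[yS exy]].
  have := Hnone y; rewrite /= inE yS exy /= => /negbFE.
  rewrite inE => /orP[/eqP yx|yr].
    by move: exy; rewrite yx (negbTE (irr x)).
  clear Hnone; case: rest Hp Hu Ha yh yr => [//|r1 rest'] Hp Hu Ha yh.
  rewrite inE (negbTE yh) /= => yr'.
  case/path.splitP: yr' Hp Hu Ha => p1 p2 Hp Hu Ha.
  have := acyc (c := x :: r1 :: rcons p1 y).
  have -> : uniq (x :: r1 :: rcons p1 y).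
    move: Hu; rewrite -cat_cons -cat_cons cat_uniq; by case/and3P.
  have -> : 3 <= size (x :: r1 :: rcons p1 y) by rewrite /= size_rcons.
  move=> /(_ isT isT); rewrite /cycle rcons_path.
  move: Hp; rewrite -cat_cons cat_path => /andP[-> _].
  by rewrite /= last_rcons esym exy.
suff H : forall n x rest, #|V| - size (x :: rest) <= n -> path e x rest ->
    uniq (x :: rest) -> all (fun w => w \in S) (x :: rest) -> False.
  by apply: (H #|V| x0 [::]) => //=; rewrite ?leq_subr // Hx0.
elim=> [|n IH] x rest Hn Hp Hu Ha; have [y [eyx yS yn]] := step x rest Hp Hu Ha;
  have Hu' : uniq (y :: x :: rest) by rewrite cons_uniq yn Hu.
- have := max_card (mem (y :: x :: rest)); move/card_uniqP: Hu' => ->.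
  move: Hn => /=; lia.
- apply: (IH y (x :: rest)) => //=.
  + have := max_card (mem (y :: x :: rest)); move/card_uniqP: Hu' => ->.
    move: Hn => /=; lia.
  + by rewrite eyx.
  + by rewrite yS.
Qed.

Lemma sum_nb (S : {set V}) : \sum_(u in S) #|nb S u| <= 2 * (#|S| - 1).
Proof.
suff H : forall n (S : {set V}), #|S| <= n -> \sum_(u in S) #|nb S u| <= 2 * (#|S| - 1).
  exact: (H _ S (leqnn _)).
elim=> [|n IH] {}S HS.
  have -> : S = set0 by apply/eqP; rewrite -cards_eq0; lia.
  by rewrite big_set0.
case: (eqVneq S set0) => [->|Sne]; first by rewrite big_set0.
case: (pickP [pred x | (x \in S) && (#|nb S x| <= 1)]) => [x /andP[xS dx]|none]; last first.
  exfalso; apply: (no_dense Sne) => x xS; have := none x; rewrite /= xS /=.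
  by rewrite ltnNge => ->.
set S' := S :\ x.
have cS : #|S| = #|S'|.+1 by rewrite (cardsD1 x S) xS.
have IH' := IH S' ltac:(lia).
rewrite (big_setD1 x xS) /=.
have E : forall u, u \in S' -> #|nb S u| = (e x u : nat) + #|nb S' u|.
  move=> u uS; rewrite (cardsD1 x (nb S u)) inE xS esym /=; congr (_ + _).
  apply: eq_card => w; rewrite !inE; by case: (w == x).
rewrite (eq_bigr _ E) big_split /=.
have C : \sum_(u in S') (e x u : nat) = #|nb S x|.
  rewrite (eq_bigr (fun u => if e x u then 1 else 0)); last by move=> u _; case: (e x u).
  rewrite -big_mkcondr sum1_card; apply: eq_card => w; rewrite !inE.
  rewrite unfold_in /= !inE; case: (eqVneq w x) => [->|] /=; first by rewrite (negbTE (irr x)) !andbF. done.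
rewrite C.
have Z : #|S'| = 0 -> #|nb S x| = 0.
  move=> /eqP; rewrite cards_eq0 => /eqP S0; apply/eqP; rewrite cards_eq0; apply/eqP/setP => w.
  rewrite !inE; apply/negbTE; apply/negP => /andP[wS exw].
  have : w \in S' by rewrite !inE wS andbT; apply/eqP => wx; move: exw; rewrite wx (negbTE (irr x)).
  by rewrite S0 inE.
lia.
Qed.

End Forest.

Lemma interior_count (X V : finType) (e : rel V) (phi : X -> V) :
  3 <= #|X| -> binary_phylo_tree e phi ->
  #|[set v | interior phi v]| + 2 <= #|X|.
Proof.
move=> Hn [[[esym irr] conn acyc] inj leaf1 int3].
have Hs := sum_nb esym irr acyc [set: V].
have degE v : deg e v = #|nb e [set: V] v| by apply: eq_card => w; rewrite !inE.
have cX : #|codom phi| = #|X| := card_codom inj.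
have cV : #|codom phi| <= #|V| := max_card _.
have leaf x : 1 <= deg e (phi x).
  have /set0Pn [w Hw] : [set~ phi x] != set0 by rewrite -card_gt0 cardsC1; lia.
  move/connectP: (conn (phi x) w) => [[|y p] Hp Hwl].
    by move: Hw; rewrite !inE /= Hwl eqxx.
  rewrite /deg card_gt0; apply/set0Pn; exists y; rewrite inE.
  by move: Hp => /= /andP[].
have S1 : \sum_(v in [set: V]) #|nb e [set: V] v| = \sum_v deg e v.
  by apply: eq_big => [v|v _]; rewrite ?inE ?degE.
rewrite S1 (bigID (fun v => v \in codom phi)) /= in Hs.
have L1 : #|X| <= \sum_(v | v \in codom phi) deg e v.
  rewrite -cX -sum1_card; apply: leq_sum => v /codomP [x ->]; exact: leaf.
have L2 : \sum_(v | v \notin codom phi) deg e v = #|[set v | interior phi v]| * 3.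
  rewrite -sum_nat_cond_const; apply: eq_bigr => v Hv; exact: int3.
have cC : #|codom phi| + #|[predC codom phi]| = #|V| := cardC _.
have cI : #|[set v | interior phi v]| = #|[predC codom phi]|.
  by apply: eq_card => v; rewrite !inE.
rewrite cardsT L2 in Hs. rewrite cI -cX. rewrite -cC in Hs. have L1b : #|codom phi| <= \sum_(i in codom phi) deg e i by rewrite cX.
move: Hs L1b; set A := \sum_(i in codom phi) deg e i; set c := #|codom phi|; set k := #|[predC codom phi]|. lia.
Qed.

Theorem corollary1 (X V : finType) (e : rel V) (phi : X -> V)
  (Tc : {set {set X}}) :
  3 <= #|X| ->
  binary_phylo_tree e phi ->
  minimal_triplet_cover e phi Tc ->
  #|Tc| <= 3 * (#|X| - 2).
Proof.
move=> Hn Hb [[Hsz Hcov] Hmin].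
have Hm := interior_count Hn Hb.
pose sup (T' : {set {set X}}) v := [exists a, exists b, exists c, supports e phi T' a b c v].
pose crit v := [set p in Tc | ~~ sup (Tc :\ p) v].
have sub : Tc \subset \bigcup_(v | interior phi v) crit v.
  apply/subsetP => p pT.
  case: (pickP [pred v | interior phi v && ~~ sup (Tc :\ p) v]) => [v /andP[iv nv]|none].
    by apply/bigcupP; exists v => //; rewrite inE pT.
  exfalso; apply: (Hmin p pT); split.
    by move=> q /setD1P[_ qT]; exact: Hsz.
  move=> v iv; have := none v; rewrite /= iv /= => /negbFE.
  by move=> /existsP [a /existsP [b /existsP [c H]]]; exists a, b, c.
have crit3 v : interior phi v -> #|crit v| <= 3.
  move=> iv; have [a [b [c Hs]]] := Hcov v iv.
  have Hsub : crit v \subset [:: pair2 a b; pair2 a c; pair2 b c].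
    apply/subsetP => p; rewrite inE => /andP[pT nsup].
    apply/negPn/negP => Hp3; move/negP: nsup; apply; apply/existsP; exists a.
    apply/existsP; exists b; apply/existsP; exists c.
    move: Hs; rewrite /supports !inE => /andP[s1 /andP[s2 /andP[s3 /andP[t1 /andP[t2 t3]]]]].
    rewrite s1 s2 s3 t1 t2 t3 !andbT /=.
    move: Hp3; rewrite !inE.
    by rewrite !(eq_sym p); case: (pair2 a b == p); case: (pair2 a c == p); case: (pair2 b c == p).
  exact: leq_trans (subset_leq_card Hsub) (card_size _).
apply: leq_trans (subset_leq_card sub) _.
apply: leq_trans (card_bigcup_le _ _) _.
have H3 : \sum_(i | interior phi i) #|crit i| <= \sum_(i | interior phi i) 3 by apply: leq_sum.
rewrite sum_nat_cond_const in H3. move: H3 Hm. set m := #|[set v | interior phi v]|. lia.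
Qed.
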